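(* Let $k$ be a natural number, let $(X,\Sigma)$ be a measurable space, and let $\mu,\nu$ be finite measures on $(X,\Sigma)$ with $\mu$ absolutely continuous with respect to $\nu$; let $f\colon X\to[0,\infty)$ be a (measurable) Radon–Nikodym derivative $f=\frac{d\mu}{d\nu}$. Assume that one of the following holds: (I) $G=\mathbb{R}$ and $\nu$ is non-atomic; or (II) $G=\mathbb{Z}$, $X$ is finite, $\Sigma=2^X$, and $\nu$ is the counting measure. Let $q=(q_1,\dots,q_k)\in(G\cap[0,\infty))^k$ satisfy $q_1+\dots+q_k=\nu(X)$. Then there exists a partition $Q=(B_1,\dots,B_k)\in\mathcal{P}_{\nu,q}$ such that for all $i,j\in[k]$ with $i<j$, $$\sup_{B_i}f\le\inf_{B_j}f,$$ with the conventions $\sup\emptyset=-\infty$ and $\inf\emptyset=\infty$.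
   Context: $[k]:=\{1,\dots,k\}$. $\mathcal{P}_k$ denotes the set of all ordered partitions $P=(A_1,\dots,A_k)$ of $X$ with $A_i\in\Sigma$ for all $i$ (i.e. the $A_i$ are pairwise disjoint measurable sets, possibly empty, whose union is $X$). $\mathcal{P}_{\nu,q}:=\{P=(A_1,\dots,A_k)\in\mathcal{P}_k:\ \nu(A_i)=q_i\ \text{for all } i\in[k]\}$. *)

(* Defs.v *)
From HB Require Import structures.
From mathcomp Require Import all_boot all_order all_algebra.
From mathcomp Require Import all_classical all_reals all_analysis.
Set Implicit Arguments. Unset Strict Implicit. Unset Printing Implicit Defensive.
Import Order.TTheory GRing.Theory Num.Theory.
Local Open Scope classical_set_scope.
Local Open Scope ring_scope.
Local Open Scope ereal_scope.

Definition nonatomic d (T : measurableType d) (R : realType)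
  (nu : set T -> \bar R) : Prop :=
  forall A, measurable A -> 0 < nu A ->
    exists B, [/\ measurable B, B `<=` A & 0 < nu B < nu A].

Definition is_RN_derivative d (T : measurableType d) (R : realType)
  (mu nu : {measure set T -> \bar R}) (f : T -> R) : Prop :=
  [/\ measurable_fun setT f, (forall x, (0 <= f x)%R) &
      forall A, measurable A -> mu A = \int[nu]_(x in A) (f x)%:E].

Definition in_Pnuq d (T : measurableType d) (R : realType) (k : nat)
  (nu : set T -> \bar R) (q : 'I_k -> R) (A : 'I_k -> set T) : Prop :=
  [/\ (forall i, measurable (A i)),
      (forall i j, i != j -> A i `&` A j = set0),
      \bigcup_i A i = setT &
      (forall i, nu (A i) = (q i)%:E)].

(* Main.v *)
Require Import Defs.
From HB Require Import structures.
From mathcomp Require Import all_boot all_order all_algebra.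
From mathcomp Require Import all_classical all_reals all_analysis.
From mathcomp Require Import ring lra.
Import Order.TTheory GRing.Theory Num.Theory.
Local Open Scope classical_set_scope.
Local Open Scope ring_scope.
Section S.
Variables (R : realType) (d : measure_display) (T : measurableType d)
  (nu : {finite_measure set T -> \bar R}).
Let m (A : set T) : R := fine (nu A).
Lemma mE {A} : measurable A -> nu A = (m A)%:E.
Proof. by move=> mA; rewrite fineK // fin_num_measure. Qed.
Lemma m_ge0 A : 0 <= m A.
Proof. by apply: fine_ge0; exact: measure_ge0. Qed.
Lemma m0 : m set0 = 0.
Proof. by rewrite /m measure0. Qed.
Lemma mU {A B} : measurable A -> measurable B -> A `&` B = set0 ->
  m (A `|` B) = m A + m B.
Proof.
move=> mA mB AB.
have H : (nu (A `|` B) = nu A + nu B)%E := measureU nu mA mB AB.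
have mAB : measurable (A `|` B) by exact: measurableU.
rewrite (mE mA) (mE mB) (mE mAB) in H; by case: H.
Qed.
Lemma m_le {A B} : measurable A -> measurable B -> A `<=` B -> m A <= m B.
Proof.
move=> mA mB AB.
have H : (nu A <= nu B)%E by apply: le_measure => //; rewrite inE.
by rewrite (mE mA) (mE mB) lee_fin in H.
Qed.
Lemma mD {A B} : measurable A -> measurable B -> B `<=` A ->
  m (A `\` B) = m A - m B.
Proof.
move=> mA mB BA.
have := mU mB (measurableD mA mB) (setDIK _ _).
rewrite setDUK // => ->; lra.
Qed.
Lemma m_inc (F : nat -> set T) t : (forall n, measurable (F n)) ->
  (forall n k, (n <= k)%N -> F n `<=` F k) ->
  (forall n, m (F n) <= t) -> m (\bigcup_n F n) <= t.
Proof.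
move=> mF hF Ft.
have mUF : measurable (\bigcup_n F n) by exact: bigcupT_measurable.
have hF' : {homo F : n k / (n <= k)%N >-> (n <= k)%O}.
  by move=> n k nk; rewrite subsetEset; exact: hF.
have H := @nondecreasing_cvg_mu _ _ _ nu F mF mUF hF'.
have : (nu (\bigcup_n F n) <= t%:E)%E.
  rewrite -(cvg_lim _ H) //; apply: lime_le; first exact: cvgP H.
  by apply: nearW => n /=; rewrite mE // lee_fin.
by rewrite mE ?lee_fin //; exact: bigcupT_measurable.
Qed.
Lemma m_dec (F : nat -> set T) t : (forall n, measurable (F n)) ->
  (forall n k, (n <= k)%N -> F k `<=` F n) ->
  (forall n, t <= m (F n)) -> t <= m (\bigcap_n F n).
Proof.
move=> mF hF Ft.
have mI : measurable (\bigcap_n F n) by exact: bigcapT_measurable.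
have hF' : {homo F : n k / (n <= k)%N >-> (k <= n)%O}.
  by move=> n k nk; rewrite subsetEset; exact: hF.
have H0 : (nu (F 0%N) < +oo)%E by rewrite (mE (mF 0%N)) ltry.
have H := @nonincreasing_cvg_mu _ _ _ nu F H0 mF mI hF'.
have : (t%:E <= nu (\bigcap_n F n))%E.
  rewrite -(cvg_lim _ H) //; apply: lime_ge; first exact: cvgP H.
  by apply: nearW => n /=; rewrite mE // lee_fin.
by rewrite mE ?lee_fin.
Qed.

Lemma exists_nat (x : R) : exists n : nat, x < n%:R.
Proof.
exists (Num.Def.archi_bound `|x|).
exact: le_lt_trans (ler_norm x) (archi_boundP (normr_ge0 x)).
Qed.

Lemma small_aux (hna : nonatomic nu) n A : measurable A -> 0 < m A ->
  exists B, [/\ measurable B, B `<=` A, 0 < m B & (n%:R + 1) * m B <= m A].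
Proof.
move=> mA mA0; elim: n => [|n [B [mB BA mB0 hB]]].
  by exists A; split => //; rewrite add0r mul1r.
have : (0 < nu B)%E by rewrite (mE mB) lte_fin.
move=> /(hna _ mB) [B' [mB' B'B /andP [h1 h2]]].
rewrite (mE mB') (mE mB) !lte_fin in h1 h2.
have hn : 0 <= n%:R :> R by [].
rewrite -addn1 natrD.
case: (lerP (m B' * 2) (m B)) => h.
  exists B'; split => //; first exact: subset_trans B'B BA.
  nra.
exists (B `\` B'); split => //.
- exact: measurableD.
- by move=> x [] /BA.
- by rewrite mD //; lra.
- rewrite mD //; nra.
Qed.

Lemma small (hna : nonatomic nu) A e : measurable A -> 0 < m A -> 0 < e ->
  exists B, [/\ measurable B, B `<=` A, 0 < m B & m B < e].
Proof.
move=> mA mA0 e0.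
have [n hn] := exists_nat (m A / e).
have [B [mB BA mB0 hB]] := small_aux hna n _ mA mA0.
exists B; split => //.
rewrite ltr_pdivrMr // in hn.
have hn0 : 0 <= n%:R :> R by [].
nra.
Qed.

Lemma sierp (hna : nonatomic nu) A t : measurable A -> 0 <= t -> t <= m A ->
  exists B, [/\ measurable B, B `<=` A & m B = t].
Proof.
move=> mA t0 tA.
pose Adm B := [/\ measurable B, B `<=` A & m B <= t].
have step : forall B, exists C, Adm B -> [/\ measurable C, C `<=` A `\` B,
    m B + m C <= t & forall D, measurable D -> D `<=` A `\` B ->
      m B + m D <= t -> m D <= 2 * m C].
  move=> B; case: (pselect (Adm B)) => [[mB BA mBt]|nB]; last first.
    by exists set0.
  pose S := [set x | exists D, [/\ measurable D, D `<=` A `\` B,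
      m B + m D <= t & x = m D]].
  have S0 : S 0 by exists set0; split => //; rewrite ?m0 ?addr0.
  have hS : has_sup S.
    split; first by exists 0.
    exists t => x [D [_ _ hD ->]].
    have := m_ge0 B; lra.
  have ubS := ub_le_sup hS.2.
  case: (lerP (sup S) 0) => hs.
    exists set0 => _; split => //; first by rewrite ?m0 ?addr0.
    move=> D mD DAB hD; rewrite m0 mulr0.
    apply: le_trans hs; apply: ubS; by exists D.
  have [e [C [mC CAB hC ->]] he] := @sup_adherent _ S (sup S / 2) (divr_gt0 hs (ltr0Sn _ 1)) hS.
  exists C => _; split => // D mD DAB hD.
  have : m D <= sup S by apply: ubS; exists D.
  lra.
have [F hF] := choice step.
pose G n := iter n (fun B => B `|` F B) set0.
have inv : forall n, Adm (G n).
  elim => [|n [mG GA Gt]]; first by split => //; rewrite /G /= ?m0.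
  have [mF FAG FGt _] := hF _ (And3 mG GA Gt).
  rewrite /Adm /G iterS -/(G n).
  split.
  - exact: measurableU.
  - by move=> x [/GA|/FAG []].
  - rewrite mU //; apply/seteqP; split => // x [Gx /FAG []] _; exact.
have GS : forall n, G n.+1 = G n `|` F (G n) by [].
have mono : forall n k, (n <= k)%N -> G n `<=` G k.
  move=> n k /subnKC <-; elim: (k - n)%N => [|i IH]; first by rewrite addn0.
  by rewrite addnS GS; apply: subset_trans IH _; exact: subsetUl.
have mG n : measurable (G n) by case: (inv n).
pose Binf := \bigcup_n G n.
have mBinf : measurable Binf by exact: bigcupT_measurable.
have BinfA : Binf `<=` A by move=> x [n _]; case: (inv n) => _ GA _ /GA.
have Bt : m Binf <= t by apply: m_inc => // n; case: (inv n).
exists Binf; split => //.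
case: (lerP t (m Binf)) => h; first by apply/eqP; rewrite eq_le Bt h.
have mAB : 0 < m (A `\` Binf) by rewrite mD //; lra.
have mGS n : m (G n.+1) = m (G n) + m (F (G n)).
  have [mG' GA Gt] := inv n.
  have [mF FAG FGt _] := hF _ (inv n).
  rewrite GS mU //; apply/seteqP; split => // x [Gx /FAG []] _; exact.
have GB n : G n `<=` Binf by move=> x Gx; exists n.
have h1 : 0 < t - m Binf by rewrite subr_gt0.
have [D [mD DAB D0 Dt]] := small hna _ _ (measurableD mA mBinf) mAB h1.
have key n : m D <= 2 * m (F (G n)).
  have [_ _ _ hD] := hF _ (inv n).
  apply: hD => //.
    move=> x /DAB [Ax nBx]; split => // Gx; apply: nBx; exact: GB Gx.
  have := m_le (mG n) mBinf (GB n); lra.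
have lin n : n%:R * m D <= 2 * m (G n).
  elim: n => [|n IH]; first by rewrite /G /= m0 mul0r mulr0.
  rewrite mGS -addn1 natrD; have := key n; lra.
have [n hn] := exists_nat (2 * t / m D).
rewrite ltr_pdivrMr // in hn.
have := lin n; have [_ _ Gt] := inv n; lra.
Qed.

Lemma inv_small (x : R) : 0 < x -> exists n : nat, (n%:R + 1)^-1 < x.
Proof.
move=> x0; have [n hn] := exists_nat x^-1.
exists n; rewrite -[x in _ < x]invrK ltf_pV2 ?posrE ?invr_gt0 //.
lra.
Qed.

Lemma thresh (f : T -> R) (P : R -> Prop) :
  measurable_fun setT f -> (forall x, 0 <= f x) ->
  (forall t X, P t -> measurable X -> P (t - m X)) ->
  (forall A s, measurable A -> 0 <= s -> s <= m A -> P s ->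
     exists C, [/\ measurable C, C `<=` A & m C = s]) ->
  forall A t, measurable A -> 0 <= t -> t <= m A -> P t ->
  exists B, [/\ measurable B, B `<=` A, m B = t &
     forall x y, B x -> A y -> ~ B y -> f x <= f y].
Proof.
move=> mf f0 hP hIV A t mA t0 tA Pt.
case: (lerP (m A) t) => tA'.
  exists A; split; [done|done|by apply/eqP; rewrite eq_le tA tA'|].
  by move=> x y _ Ay /(_ Ay).
case: (lerP t 0) => t0'.
  exists set0; split; [done|done| |done].
  by rewrite m0; apply/eqP; rewrite eq_le t0 t0'.
have mfA : measurable_fun A f by exact: measurable_funS mf.
pose lev c := A `&` [set x | f x <= c].
pose ge c := A `&` [set x | c <= f x].
pose lt c := A `\` ge c.
have mlev c : measurable (lev c).
  by apply: (measurable_fun_le (g := cst c)) => //; exact: measurable_cst.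
have mge c : measurable (ge c).
  by apply: (measurable_fun_le (f := cst c)) => //; exact: measurable_cst.
have mlt c : measurable (lt c) by exact: measurableD.
pose S := [set c | t <= m (lev c)].
have levS c c' : c <= c' -> lev c `<=` lev c'.
  by move=> cc x [Ax fx]; split => //; exact: le_trans cc.
have S0 : S !=set0.
  apply: contrapT => hno.
  have H n : m (lev n%:R) <= t.
    case: (lerP (m (lev n%:R)) t) => // h; exfalso; apply: hno.
    by exists n%:R; apply: ltW.
  have : m (\bigcup_n lev n%:R) <= t.
    apply: m_inc => // n k nk; apply: levS; by rewrite ler_nat.
  have -> : \bigcup_n lev n%:R = A.
    apply/seteqP; split; first by move=> x [n _ []].
    move=> x Ax; have [n hn] := exists_nat (f x).
    by exists n => //; split => //; exact: ltW.
  lra.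
have Slb : lbound S 0.
  move=> c Sc; case: (lerP 0 c) => // c0.
  have : lev c = set0.
    apply/seteqP; split => // x [_ /= fx]; exfalso; have := f0 x; lra.
  move=> hl; move: Sc; rewrite /S /= hl m0; lra.
have hinf : has_inf S by split => //; exists 0.
pose c0 := inf S.
have pn1 n : 0 < n%:R + 1 :> R by rewrite ltr_wpDl.
have einv n k : (n <= k)%N -> (k%:R + 1)^-1 <= (n%:R + 1)^-1 :> R.
  move=> nk; rewrite lef_pV2 ?posrE // lerD2r ler_nat //.
have ha : t <= m (lev c0).
  pose F n := lev (c0 + (n%:R + 1)^-1).
  have : t <= m (\bigcap_n F n).
    apply: m_dec; first by move=> n; exact: mlev.
    - move=> n k nk; apply: levS; rewrite lerD2l; exact: einv.
    - move=> n.
      have en : 0 < (n%:R + 1)^-1 :> R by rewrite invr_gt0.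
      have [c Sc hc] := inf_adherent en hinf.
      apply: le_trans Sc _; apply: m_le; [exact: mlev|exact: mlev|].
      apply: levS; exact: ltW.
  move=> h; apply: le_trans h _; apply: m_le; [|exact: mlev|].
    by apply: bigcapT_measurable => n; exact: mlev.
  move=> x hx; split; first by have [] := hx 0%N I.
  rewrite /=; case: (lerP (f x) c0) => // hfx.
  have hd : 0 < f x - c0 by rewrite subr_gt0.
  have [n hn] := inv_small _ hd.
  have [_ /= h2] := hx n I. lra.
have hb : m (lt c0) <= t.
  pose F n := lev (c0 - (n%:R + 1)^-1).
  have : m (\bigcup_n F n) <= t.
    apply: m_inc; first by move=> n; exact: mlev.
    - move=> n k nk; apply: levS; rewrite lerD2l lerN2; exact: einv.
    - move=> n; case: (lerP (m (F n)) t) => // h; exfalso.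
      have en : 0 < (n%:R + 1)^-1 :> R by rewrite invr_gt0.
      have : c0 <= c0 - (n%:R + 1)^-1.
        apply: (ge_inf hinf.2); rewrite /S /=; exact: ltW.
      lra.
  move=> h; apply: le_trans _ h; apply: m_le; [exact: mlt| |].
    by apply: bigcupT_measurable => n; exact: mlev.
  move=> x [Ax nge].
  have hfx : f x < c0.
    case: (lerP c0 (f x)) => // h'; exfalso; exact: nge.
  have hd : 0 < c0 - f x by rewrite subr_gt0.
  have [n hn] := inv_small _ hd.
  exists n => //; split => //=; lra.
have ltlev : lt c0 `<=` lev c0.
  move=> x [Ax nge]; split => //=.
  case: (lerP c0 (f x)) => h'; last exact: ltW.
  exfalso; exact: nge.
pose E := lev c0 `\` lt c0.
have mE' : measurable E by exact: measurableD.
have mEE : m E = m (lev c0) - m (lt c0) by rewrite mD.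
have s0 : 0 <= t - m (lt c0) by lra.
have s1 : t - m (lt c0) <= m E by lra.
have [C [mC CE mCs]] := hIV E (t - m (lt c0)) mE' s0 s1 (hP _ _ Pt (mlt c0)).
exists (lt c0 `|` C); split.
- exact: measurableU.
- by move=> x [[]|/CE [[]]].
- rewrite mU // ?mCs; first lra.
  by apply/seteqP; split => // x [Lx /CE [_]].
- move=> x y Bx Ay nBy.
  have hx : f x <= c0.
    case: Bx => [/ltlev [] //|/CE [[]] //].
  have hy : c0 <= f y.
    case: (lerP c0 (f y)) => // h'; exfalso; apply: nBy; left; split => //.
    move=> [_ /=]; lra.
  exact: le_trans hx hy.
Qed.

Lemma chain (f : T -> R) (P : R -> Prop) :
  measurable_fun setT f -> (forall x, 0 <= f x) ->
  (forall t X, P t -> measurable X -> P (t - m X)) ->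
  (forall A s, measurable A -> 0 <= s -> s <= m A -> P s ->
     exists C, [/\ measurable C, C `<=` A & m C = s]) ->
  forall (s : seq R) (x : R) (A : set T), measurable A ->
  (forall y, y \in x :: s -> 0 <= y /\ P y) ->
  m A = \sum_(y <- x :: s) y ->
  exists B : nat -> set T, [/\ forall i, measurable (B i) /\ B i `<=` A,
   forall i j, i != j -> B i `&` B j = set0,
   forall a, A a -> exists2 i, (i < size (x :: s))%N & B i a,
   forall i, (i < size (x :: s))%N -> m (B i) = nth 0 (x :: s) i &
   forall i j, (i < j)%N -> forall a b, B i a -> B j b -> f a <= f b].
Proof.
move=> mf f0 hP hIV; elim => [|y s IH] x A mA hs hsum.
  exists (fun i => if i is 0%N then A else set0); split.
  - by case=> [|i]; split.
  - case=> [|i] [|j] //= _; [exact: setI0|exact: set0I|exact: set0I].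
  - by move=> a Aa; exists 0%N.
  - by case=> // _; rewrite hsum big_seq1.
  - by move=> i [|j].
have [x0 Px] := hs x (mem_head _ _).
have sum0 : 0 <= \sum_(z <- y :: s) z.
  rewrite big_seq; apply: sumr_ge0 => z zin.
  by case: (hs z); rewrite // in_cons zin orbT.
rewrite big_cons in hsum.
have xA : x <= m A by lra.
have [B0 [mB0 B0A mB0x ord0]] := thresh _ _ mf f0 hP hIV _ _ mA x0 xA Px.
have mAB : measurable (A `\` B0) by exact: measurableD.
have hs' : forall z, z \in y :: s -> 0 <= z /\ P z.
  by move=> z zin; apply: hs; rewrite in_cons zin orbT.
have hsum' : m (A `\` B0) = \sum_(z <- y :: s) z by rewrite mD // mB0x; lra.
have [B' [hB1 hB2 hB3 hB4 hB5]] := IH y (A `\` B0) mAB hs' hsum'.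
exists (fun i => if i is i'.+1 then B' i' else B0); split.
- case=> [|i]; first by split.
  have [mi iA] := hB1 i; split => //; by move=> a /iA [].
- case=> [|i] [|j] //= ij.
  + apply/seteqP; split => // a [Ba /(hB1 j).2 [] //].
  + apply/seteqP; split => // a [/(hB1 i).2 [] _ /[swap] ? //].
  + exact: hB2.
- move=> a Aa; case: (pselect (B0 a)) => Ba; first by exists 0%N.
  have [i ilt Bia] := hB3 a (conj Aa Ba).
  by exists i.+1.
- by case=> [|i] //= ilt; apply: hB4.
- case=> [|i] [|j] //= ij a b.
  + move=> Ba /(hB1 j).2 [Ab nBb]; exact: ord0.
  + exact: hB5.
Qed.

Lemma cnt_nat (hfin : finite_set (@setT T)) (hcnt : forall A, nu A = counting A)
  A : m A \is a Num.nat.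
Proof.
have fA : finite_set A by apply: sub_finite_set hfin.
by rewrite /m hcnt /counting asboolT //= natr_nat.
Qed.

Lemma cnt1 (hfin : finite_set (@setT T)) (hcnt : forall A, nu A = counting A)
  a : m [set a] = 1.
Proof.
by rewrite /m hcnt /counting asboolT ?finite_set1 //= fset_set1 finmap.cardfs1.
Qed.

Lemma cnt_IV (hfin : finite_set (@setT T)) (hmeas : forall A : set T, measurable A)
  (hcnt : forall A, nu A = counting A) :
  forall A s, measurable A -> 0 <= s -> s <= m A -> s \is a Num.int ->
     exists C, [/\ measurable C, C `<=` A & m C = s].
Proof.
move=> A s _ s0 sA; rewrite intrEge0 // => /natrP [n sn]; subst s.
clear s0; elim: n sA => [|n IH] hn.
  by exists set0; split => //; rewrite m0.
have : n%:R <= m A by apply: le_trans hn; rewrite ler_nat.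
move=> /IH [C [_ CA mC]].
have [a [Aa nCa]] : exists a, (A `\` C) a.
  apply: contrapT => h.
  have e : A `\` C = set0.
    by apply/seteqP; split => // z hz; apply: h; exists z.
  have := mD (hmeas A) (hmeas C) CA; rewrite e m0 mC.
  rewrite -addn1 natrD in hn; lra.
exists (C `|` [set a]); split => //.
- by move=> z [/CA|->].
- rewrite mU // ?mC ?cnt1 //; first by rewrite -[n.+1]addn1 natrD.
  by apply/seteqP; split => // z [Cz /= za]; apply: nCa; rewrite -za.
Qed.
End S.

Lemma sup_le_inf (R : realType) (T : Type) (f : T -> R) (B1 B2 : set T) :
  (forall a b, B1 a -> B2 b -> f a <= f b) ->
  (ereal_sup [set (f x)%:E | x in B1] <= ereal_inf [set (f x)%:E | x in B2])%E.
Proof.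
move=> H; apply: le_ereal_inf_tmp => _ [b Bb <-].
apply: ge_ereal_sup => _ [a Ba <-]; rewrite lee_fin; exact: H.
Qed.

Theorem proposition1 (R : realType) (d : measure_display) (T : measurableType d)
  (k : nat) (mu nu : {finite_measure set T -> \bar R}) (f : T -> R)
  (q : 'I_k -> R) :
  (0 < k)%N ->
  mu `<< nu ->
  is_RN_derivative mu nu f ->
  ( (* case (I): G = R and nu non-atomic *)
    nonatomic nu
    \/
    (* case (II): G = Z, X finite, Sigma = 2^X, nu the counting measure *)
    [/\ finite_set (@setT T), (forall A : set T, measurable A),
        (forall A : set T, nu A = counting A) &
        (forall i, q i \is a Num.int)] ) ->
  (forall i, 0 <= q i) ->
  ((\sum_(i < k) q i)%:E = nu setT)%E ->
  exists B : 'I_k -> set T,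
    in_Pnuq nu q B /\
    (forall i j : 'I_k, (i < j)%N ->
       (ereal_sup [set (f x)%:E | x in B i] <=
        ereal_inf [set (f x)%:E | x in B j])%E).
Proof.
move=> k0 _ [mf f0 _] hcase q0 hsum.
have [P [hP hIV hPq]] : exists P : R -> Prop,
  [/\ (forall t X, P t -> measurable X -> P (t - fine (nu X))),
      (forall A s, measurable A -> 0 <= s -> s <= fine (nu A) -> P s ->
         exists C, [/\ measurable C, C `<=` A & fine (nu C) = s]) &
      forall i, P (q i)].
  case: hcase => [hna|[hfin hmeas hcnt qint]].
    exists (fun _ => True); split => // A s mA s0 sA _.
    exact: (sierp _ _ _ nu hna A s mA s0 sA).
  exists (fun t => t \is a Num.int); split => //.
  - move=> t X Pt _; rewrite rpredB //.
    by have := cnt_nat _ _ _ nu hfin hcnt X; rewrite natrEint => /andP [].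
  - exact: (cnt_IV _ _ _ nu hfin hmeas hcnt).
clear hcase; case: k k0 q q0 hsum hPq => // k' _ q q0 hsum hPq.
pose g i := q (inord i).
have hl : g 0%N :: [seq g i | i <- iota 1 k'] = [seq g i | i <- iota 0 k'.+1] by [].
have hs : forall y, y \in g 0%N :: [seq g i | i <- iota 1 k'] -> 0 <= y /\ P y.
  move=> y; rewrite hl => /mapP [i _ ->]; split; [exact: q0|exact: hPq].
have hsum' : fine (nu setT) = \sum_(y <- g 0%N :: [seq g i | i <- iota 1 k']) y.
  rewrite hl big_map -hsum; have -> : forall x : R, fine x%:E = x by [].
  have -> : \sum_(i <- iota 0 k'.+1) g i = \sum_(i < k'.+1) g i by rewrite -(big_mkord xpredT g) /index_iota subn0.
  by apply: eq_bigr => i _; rewrite /g inord_val.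
have [B [hB1 hB2 hB3 hB4 hB5]] := chain _ _ _ nu f P mf f0 hP hIV _ _ _ measurableT hs hsum'.
rewrite hl size_map size_iota in hB3 hB4.
exists (fun i => B i); split.
  split.
  - by move=> i; case: (hB1 i).
  - by move=> i j ij; apply: hB2.
  - apply/seteqP; split => // a _.
    have [i ilt Bia] := hB3 a I.
    by exists (Ordinal ilt).
  - move=> i; rewrite (mE _ _ _ nu (A:=B i)) /=; last by case: (hB1 i).
    rewrite hB4 // (nth_map 0%N) ?size_iota // nth_iota // /g add0n.
    by rewrite inord_val.
move=> i j ij; apply: sup_le_inf => a b; exact: hB5.
Qed.
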